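(* Let $(X,\tau)$ be an extended locally convex space with finest locally convex topology $\tau_F$, and let $Y$ be a linear subspace of $X$. Then the relative topology $\tau_F|_Y$ is the finest locally convex topology of the extended locally convex space $(Y,\tau|_Y)$. Moreover, $(Y,\tau_F|_Y)^*=(Y,\tau|_Y)^*$.
   Context: An extended seminorm on a vector space $X$ over $\mathbb{R}$ or $\mathbb{C}$ is a map $\rho:X\to[0,\infty]$ with $\rho(\alpha x)=|\alpha|\rho(x)$ and $\rho(x+y)\le\rho(x)+\rho(y)$. An extended locally convex space $(X,\tau)$ is a vector space with the topology induced by a family $\{\rho_i\}$ of extended seminorms (neighborhood base at $x_0$: $\{x:\max_{i\in J}\rho_i(x-x_0)<\varepsilon\}$, $J$ finite, $\varepsilon>0$). A locally convex topology is one induced in this way by finite-valued seminorms. The finest locally convex topology of an elcs $(X,\tau)$ is the locally convex topology $\tau_F\subseteq\tau$ on $X$ such that every locally convex topology $\sigma\subseteq\tau$ on $X$ satisfies $\sigma\subseteq\tau_F$. For a topological vector-space-like structure $(Z,\sigma)$, $(Z,\sigma)^*$ denotes the set of $\sigma$-continuous linear functionals on $Z$. *)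

(* Defs.v *)
From HB Require Import structures.
From mathcomp Require Import all_boot all_order all_algebra.
From mathcomp Require Import all_classical all_reals all_analysis.
Set Implicit Arguments. Unset Strict Implicit. Unset Printing Implicit Defensive.
Import Order.TTheory GRing.Theory Num.Theory.
Import numFieldNormedType.Exports.
Local Open Scope classical_set_scope.
Local Open Scope ring_scope.

(* Scalars: K : numFieldType (covers R and C = complex R). Extended seminorms
   take values in \bar K, nonnegative (hence "real" for C); |a| is normr. *)

Section Defs.
Variable K : numFieldType.

Definition ext_seminorm (V : lmodType K) (p : V -> \bar K) : Prop :=
  [/\ (forall x, (0 <= p x)%E),
      (forall (a : K) x, p (a *: x) = ((`|a|)%:E * p x)%E) &
      (forall x y : V, (p (x + y)%R <= p x + p y)%E)].

Definition seminorm (V : lmodType K) (p : V -> \bar K) : Prop :=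
  ext_seminorm p /\ (forall x, p x \is a fin_num).

Definition induced_top (V : lmodType K) (I : Type) (rho : I -> V -> \bar K)
  : set (set V) :=
  [set U : set V | forall x0, U x0 -> exists J : set I, finite_set J /\
     exists2 e : K, 0 < e &
       [set x : V | forall i, J i -> (rho i (x - x0)%R < e%:E)%E] `<=` U].

Definition elc_topology (V : lmodType K) (tau : set (set V)) : Prop :=
  exists (I : Type) (rho : I -> V -> \bar K),
    (forall i, ext_seminorm (rho i)) /\ tau = induced_top rho.

Definition lc_topology (V : lmodType K) (tau : set (set V)) : Prop :=
  exists (I : Type) (rho : I -> V -> \bar K),
    (forall i, seminorm (rho i)) /\ tau = induced_top rho.

(* tauF is the finest locally convex topology of the elcs (V, tau);
   sigma `<=` tau means sigma is coarser than tau. *)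
Definition finest_lc_topology (V : lmodType K) (tau tauF : set (set V)) : Prop :=
  [/\ lc_topology tauF, tauF `<=` tau &
      forall sigma, lc_topology sigma -> sigma `<=` tau -> sigma `<=` tauF].

Definition subsp (V : lmodType K) (S : submodClosed V) := {x : V | x \in S}.

Section Sub.
Variables (V : lmodType K) (S : submodClosed V).
HB.instance Definition _ := [isSub for (@sval V (fun x => x \in S)) : subsp S -> V].
HB.instance Definition _ := [Choice of subsp S by <:].
HB.instance Definition _ := [SubChoice_isSubLmodule of subsp S by <:].
End Sub.

Definition rel_top (V : lmodType K) (S : submodClosed V) (tau : set (set V))
  : set (set (subsp S)) :=
  [set W | exists U, tau U /\ W = (val : subsp S -> V) @^-1` U].

Definition cdual (Y : lmodType K) (sigma : set (set Y)) : set (Y -> K) :=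
  [set f | (forall (a : K) x y, f (a *: x + y) = a * f x + f y) /\
           (forall U : set K, open U -> sigma (f @^-1` U))].

End Defs.
Arguments rel_top {K V} S tau _.

(* Main.v *)
Require Import Defs.
From HB Require Import structures.
From mathcomp Require Import all_boot all_order all_algebra.
From mathcomp Require Import all_classical all_reals all_analysis.
Import Order.TTheory GRing.Theory Num.Theory.
Import numFieldNormedType.Exports.
Local Open Scope classical_set_scope.
Local Open Scope ring_scope.
Set Implicit Arguments. Unset Strict Implicit. Unset Printing Implicit Defensive.

Section Aux.
Variable K : numFieldType.

Lemma pinf_lt (e : K) : (+oo < e%:E)%E = false.
Proof. by rewrite /Order.lt/=. Qed.
Lemma ge0_ninf : (0 <= -oo :> \bar K)%E = false.
Proof. by rewrite /Order.le/=. Qed.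

Lemma nonneg_lt_fin (x : \bar K) (e : K) : (0 <= x)%E -> (x < e%:E)%E ->
  exists2 r, 0 <= r & x = r%:E.
Proof.
case: x => [r| |]; first by rewrite lee_fin => r0 _; exists r.
  by rewrite pinf_lt.
by rewrite ge0_ninf.
Qed.

Lemma min_pos (a b : K) : 0 < a -> 0 < b -> exists2 m, 0 < m & m <= a /\ m <= b.
Proof.
move=> a0 b0; case: (real_leP (gtr0_real a0) (gtr0_real b0)) => h.
  by exists a.
by exists b => //; split => //; exact: ltW.
Qed.

Lemma mem_drop_cons (T : eqType) (a i : T) (s : seq T) : i \in s -> i \in a :: s.
Proof. by move=> h; rewrite in_cons h orbT. Qed.

Lemma finite_min (T : Type) (J : set T) (P : T -> K -> Prop) :
  finite_set J ->
  (forall i d d', 0 < d' -> d' <= d -> P i d -> P i d') ->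
  (forall i, J i -> exists2 d, 0 < d & P i d) ->
  exists2 d, 0 < d & forall i, J i -> P i d.
Proof.
elim/Pchoice: T J P => T J P /finite_fsetP [X ->] Pmono HP.
suff : forall s : seq T, (forall i, i \in s -> exists2 d, 0 < d & P i d) ->
  exists2 d, 0 < d & forall i, i \in s -> P i d.
  move=> /(_ (finmap.enum_fset X)) [|d d0 Hd]; first by move=> i iX; apply: HP.
  by exists d => // i iX; apply: Hd.
elim => [_|a s IH H]; first by exists 1.
have [d1 d10 H1] := IH (fun i ins => H i (mem_drop_cons a ins)).
have [d2 d20 H2] := H a (mem_head _ _).
have [m m0 [m1 m2]] := min_pos d10 d20.
exists m => // i; rewrite in_cons => /orP[/eqP ->|ins].
  exact: Pmono H2.
exact: Pmono (H1 _ ins).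
Qed.

Definition bl (V : lmodType K) (I : Type) (rho : I -> V -> \bar K) (J : set I)
  (x0 : V) (e : K) : set V :=
  [set x | forall i, J i -> (rho i (x - x0)%R < e%:E)%E].

Lemma bl_open (V : lmodType K) (I : Type) (rho : I -> V -> \bar K)
  (J : set I) (x0 : V) (e : K) :
  (forall i, ext_seminorm (rho i)) -> finite_set J ->
  induced_top rho (bl rho J x0 e).
Proof.
move=> hrho fJ x1 hx1; exists J; split => //.
pose P i d := forall x, (rho i (x - x1)%R < d%:E)%E -> (rho i (x - x0)%R < e%:E)%E.
have Pmono : forall i d d', 0 < d' -> d' <= d -> P i d -> P i d'.
  move=> i d d' d'0 d'd H x hx; apply: H; apply: (lt_le_trans hx).
  by rewrite lee_fin.
have HP : forall i, J i -> exists2 d, 0 < d & P i d.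
  move=> i Ji; have [h0 _ htri] := hrho i.
  have [v v0 hv] := nonneg_lt_fin (h0 _) (hx1 i Ji).
  exists (e - v); first by rewrite subr_gt0 -lte_fin -hv; exact: hx1.
  move=> x hx.
  have [w w0 hw] := nonneg_lt_fin (h0 _) hx.
  have := htri (x - x1) (x1 - x0).
  rewrite addrA subrK => /le_lt_trans; apply.

  rewrite hv hw -EFinD lte_fin.
  move: hx; rewrite hw; rewrite lte_fin; by rewrite ltrBrDr.
have [d d0 Hd] := finite_min fJ Pmono HP.
exists d => // x hx i Ji; exact: (Hd i Ji x (hx i Ji)).
Qed.

Lemma induced_top_bigcup (V : lmodType K) (I : Type) (rho : I -> V -> \bar K)
  (F : set (set V)) : F `<=` induced_top rho ->
  induced_top rho (\bigcup_(U in F) U).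
Proof.
move=> FU x0 [U FU' Ux0].
have [J [fJ [e e0 H]]] := FU U FU' x0 Ux0.
exists J; split => //; exists e => // x hx; exists U => //; exact: H.
Qed.

Lemma rel_of_local (V : lmodType K) (Y : submodClosed V) (T : set (set V))
  (W : set (subsp Y)) :
  (forall F, F `<=` T -> T (\bigcup_(U in F) U)) ->
  (forall y0, W y0 -> exists U, [/\ T U, U (val y0) & (val @^-1` U) `<=` W]) ->
  rel_top Y T W.
Proof.
move=> hT hW.
exists (\bigcup_(U in [set U | T U /\ (val @^-1` U) `<=` W]) U); split.
  by apply: hT => U [].
apply/seteqP; split => [y Wy|y [U [_ UW] Uy]]; last exact: UW.
have [U [TU Uy UW]] := hW y Wy.
by exists U.
Qed.

End Aux.


Lemma sub3 (V : zmodType) (a b c a' b' c' : V) :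
  (a - a') + (b - b') + (c - c') = (a + b + c) - (a' + b' + c').
Proof. by rewrite [(a - a') + _]addrACA -opprD [(a + b - _) + _]addrACA -opprD. Qed.

Lemma add3 (V : zmodType) (a b c a' b' c' : V) :
  (a + b + c) + (a' + b' + c') = (a + a') + (b + b') + (c + c').
Proof. by rewrite [(a + a') + _]addrACA [(a + b + _) + _]addrACA. Qed.

Section Lin.
Variables (K : numFieldType) (V : lmodType K).

Definition lsubspace (A : set V) :=
  A 0 /\ forall (a : K) u v, A u -> A v -> A (a *: u + v).

Lemma subspaceZ A a u : lsubspace A -> A u -> A (a *: u).
Proof. by move=> [A0 Acl] Au; have := Acl a u 0 Au A0; rewrite addr0. Qed.
Lemma subspaceD A u v : lsubspace A -> A u -> A v -> A (u + v).
Proof. by move=> [A0 Acl] Au Av; have := Acl 1 u v Au Av; rewrite scale1r. Qed.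
Lemma subspaceN A u : lsubspace A -> A u -> A (- u).
Proof. by move=> sA Au; rewrite -scaleN1r; exact: subspaceZ. Qed.

Lemma complement (A B : set V) : lsubspace A -> lsubspace B -> A `<=` B ->
  exists C, [/\ lsubspace C, C `<=` B, (forall x, A x -> C x -> x = 0) &
    forall b, B b -> exists a c, [/\ A a, C c & b = a + c]].
Proof.
move=> sA sB AB.
pose P := [set C : set V | [/\ C `<=` B, (forall x, A x -> C x -> x = 0) &
   forall a u v, C u -> C v -> C (a *: u + v)]].
have [C [[CB CA Ccl] Cmax]] : exists C, P C /\ forall D, C `<` D -> ~ P D.
  apply: Zorn_bigcup => F FP Ftot; split.
  - by move=> x [D FD Dx]; have [+ _ _] := FP D FD; apply.
  - by move=> x Ax [D FD Dx]; have [_ + _] := FP D FD; apply.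
  - move=> a u v [D1 F1 u1] [D2 F2 v2].
    have [h|h] := Ftot D1 D2 F1 F2.
      exists D2 => //; have [_ _ +] := FP D2 F2; apply => //; exact: h.
    exists D1 => //; have [_ _ +] := FP D1 F1; apply => //; exact: h.
have C0 : C 0.
  have [[u Cu]|nC] := pselect (exists u, C u).
    by have := Ccl (-1) u u Cu Cu; rewrite scaleN1r addNr.
  exfalso; apply: (Cmax [set 0]).
    split; first by move=> x Cx; exfalso; apply: nC; exists x.
    by move=> /(_ 0 erefl) C0; apply: nC; exists 0.
  split.
  - by move=> x ->; case: sB.
  - by move=> x _ ->.
  - by move=> a u v -> ->; rewrite scaler0 addr0.
have sC : lsubspace C by [].
exists C; split => // b Bb.
apply: contrapT => nb.
pose C' := [set x | exists t c, C c /\ x = c + t *: b].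
apply: (Cmax C').
  split; first by move=> x Cx; exists 0, x; rewrite scale0r addr0.
  move=> /(_ b) h; apply: nb; exists 0, b; split => //; first by case: sA.
    by apply: h; exists 1, 0; rewrite scale1r add0r.
  by rewrite add0r.
split.
- move=> _ [t [c [Cc ->]]]; apply: subspaceD => //; first exact: CB.
  exact: subspaceZ.
- move=> x Ax [t [c [Cc xE]]].
  have [t0|tn0] := eqVneq t 0.
    by move: xE Ax; rewrite t0 scale0r addr0 => -> Ac; exact: CA.
  exfalso; apply: nb; exists (t^-1 *: x), (- t^-1 *: c); split.
  + exact: subspaceZ sA Ax.
  + exact: subspaceZ.
  + rewrite xE scaleNr scalerDr scalerA mulVf // scale1r.
    by rewrite addrAC addrN add0r.
- move=> a _ _ [t1 [c1 [C1 ->]]] [t2 [c2 [C2 ->]]].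
  exists (a * t1 + t2), (a *: c1 + c2); split; first exact: Ccl.
  by rewrite scalerDr scalerA scalerDl addrACA.
Qed.


Lemma decomp (N Y : set V) : lsubspace N -> lsubspace Y ->
  exists (phi psi : V -> V),
  [/\ forall (a : K) u v, phi (a *: u + v) = a *: phi u + phi v,
      forall (a : K) u v, psi (a *: u + v) = a *: psi u + psi v,
      (forall x, N (phi x)) /\ (forall x, Y (psi x)),
      (forall n, N n -> phi n = n /\ psi n = 0) &
      (forall y, Y y -> phi y + psi y = y)].
Proof.
move=> sN sY.
have sNY : lsubspace (N `&` Y).
  split; first by split; [case: sN|case: sY].
  by move=> a u v [? ?] [? ?]; split; [case: sN => _; apply|case: sY => _; apply].
have [C1 [sC1 C1Y C1NY dY]] := complement sNY sY (fun x => @proj2 _ _).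
pose S := [set x | exists n c, [/\ N n, C1 c & x = n + c]].
have sS : lsubspace S.
  split; first by exists 0, 0; split; [case: sN|case: sC1|rewrite addr0].
  move=> a _ _ [n1 [c1 [N1 K1 ->]]] [n2 [c2 [N2 K2 ->]]].
  exists (a *: n1 + n2), (a *: c1 + c2); split.
  - by case: sN => _; apply.
  - by case: sC1 => _; apply.
  - by rewrite scalerDr addrACA.
have sT : lsubspace [set: V] by [].
have [D [sD _ DS dX]] := complement sS sT (@subsetT _ S).
have uniq0 n c d : N n -> C1 c -> D d -> n + c + d = 0 -> [/\ n = 0, c = 0 & d = 0].
  move=> Nn Cc Dd h.
  have d0 : d = 0.
    apply: DS => //; exists (- n), (- c); split; try exact: subspaceN.
    by rewrite -opprD; apply/eqP; rewrite -addr_eq0 addrC h.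
  move: h; rewrite d0 addr0 => h.
  have c0 : c = 0.
    apply: C1NY => //; split; last exact: C1Y.
    have -> : c = - n by apply/eqP; rewrite -addr_eq0 addrC h.
    exact: subspaceN.
  by split => //; move: h; rewrite c0 addr0.
have uniq n1 c1 d1 n2 c2 d2 : N n1 -> C1 c1 -> D d1 -> N n2 -> C1 c2 -> D d2 ->
    n1 + c1 + d1 = n2 + c2 + d2 -> n1 = n2 /\ c1 = c2.
  move=> N1 K1 D1 N2 K2 D2 h.
  have [] := uniq0 (n1 - n2) (c1 - c2) (d1 - d2).
  - by apply: subspaceD => //; exact: subspaceN.
  - by apply: subspaceD => //; exact: subspaceN.
  - by apply: subspaceD => //; exact: subspaceN.
  - by rewrite sub3 h subrr.
  - by move=> /subr0_eq -> /subr0_eq ->.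
have dec x : exists t : V * V * V,
    [/\ N t.1.1, C1 t.1.2, D t.2 & x = t.1.1 + t.1.2 + t.2].
  have [s [d [[n [c [Nn Cc ->]]] Dd ->]]] := dX x I.
  by exists (n, c, d).
have [f hf] := choice dec.
have key x n c d : N n -> C1 c -> D d -> x = n + c + d ->
    (f x).1.1 = n /\ (f x).1.2 = c.
  move=> Nn Cc Dd xE; have [N' C' D' xE'] := hf x.
  by apply: (uniq _ _ (f x).2 _ _ d) => //; rewrite -xE' xE.
have lin a u v : (f (a *: u + v)).1.1 = a *: (f u).1.1 + (f v).1.1 /\
                 (f (a *: u + v)).1.2 = a *: (f u).1.2 + (f v).1.2.
  have [Nu Cu Du uE] := hf u; have [Nv Cv Dv vE] := hf v.
  apply: (key _ _ _ (a *: (f u).2 + (f v).2)).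
  - by case: sN => _; apply.
  - by case: sC1 => _; apply.
  - by case: sD => _; apply.
  - by rewrite {1}uE {1}vE !scalerDr add3.
exists (fun x => (f x).1.1), (fun x => (f x).1.2); split.
- by move=> a u v; case: (lin a u v).
- by move=> a u v; case: (lin a u v).
- by split => x; have [? ? ? ?] := hf x => //; exact: C1Y.
- move=> n Nn; apply: (key _ _ _ 0) => //; first by case: sC1.
    by case: sD.
  by rewrite !addr0.
- move=> y Yy; have [m [c [[Nm Ym] Cc ->]]] := dY y Yy.
  have [-> ->] := key (m + c) m c 0 Nm Cc (proj1 sD) (esym (addr0 _)).
  by [].
Qed.

End Lin.


Section Fin.
Variable K : numFieldType.

Lemma nonneg_le_fin (x : \bar K) (e : K) : (0 <= x)%E -> (x <= e%:E)%E ->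
  x \is a fin_num.
Proof.
by case: x => [r| |] //; rewrite /Order.le/=.
Qed.

Variables (V : lmodType K) (p : V -> \bar K).
Hypothesis hp : ext_seminorm p.

Lemma esn0 : p 0 = 0.
Proof. by have [_ hZ _] := hp; have := hZ 0 0; rewrite scale0r normr0 mul0e. Qed.

Lemma fsn0 x : 0 <= fine (p x).
Proof. by have [h0 _ _] := hp; have := h0 x; case: (p x) => [r| |] //=; rewrite lee_fin. Qed.

Lemma fsnZ (a : K) x : p x \is a fin_num -> fine (p (a *: x)) = `|a| * fine (p x).
Proof. by have [_ hZ _] := hp => fx; rewrite hZ -(fineK fx) -EFinM /=. Qed.

Lemma fsnD x y : p x \is a fin_num -> p y \is a fin_num ->
  fine (p (x + y)) <= fine (p x) + fine (p y).
Proof.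
have [h0 _ hD] := hp => fx fy.
have h := hD x y; rewrite -(fineK fx) -(fineK fy) -EFinD in h.
have fxy := nonneg_le_fin (h0 _) h.
by rewrite -lee_fin fineK.
Qed.

Lemma fsnZfin (a : K) x : p x \is a fin_num -> p (a *: x) \is a fin_num.
Proof. by have [_ hZ _] := hp => fx; rewrite hZ -(fineK fx) -EFinM. Qed.

Lemma fsnDfin x y : p x \is a fin_num -> p y \is a fin_num -> p (x + y) \is a fin_num.
Proof.
have [h0 _ hD] := hp => fx fy.
have h := hD x y; rewrite -(fineK fx) -(fineK fy) -EFinD in h.
exact: nonneg_le_fin (h0 _) h.
Qed.

End Fin.

Section Sums.
Variable K : numFieldType.

Lemma sum_term (T : eqType) (s : seq T) (f : T -> K) i :
  (forall j, j \in s -> 0 <= f j) -> i \in s -> f i <= \sum_(j <- s) f j.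
Proof.
elim: s => // a s IH H; rewrite in_cons big_cons => /orP[/eqP ->|ins].
  rewrite lerDl big_seq; apply: sumr_ge0 => j js; apply: H.
  by rewrite in_cons js orbT.
apply: le_trans (IH _ ins) _; first by move=> j js; apply: H; rewrite in_cons js orbT.
by rewrite lerDr; apply: H; exact: mem_head.
Qed.

Lemma sum_le_const (T : eqType) (s : seq T) (f : T -> K) d :
  (forall j, j \in s -> f j <= d) -> \sum_(j <- s) f j <= d *+ size s.
Proof.
elim: s => [|a s IH H]; first by rewrite big_nil.
rewrite big_cons /= mulrS; apply: lerD; first by apply: H; exact: mem_head.
by apply: IH => j js; apply: H; rewrite in_cons js orbT.
Qed.

End Sums.

Section Ext.
Variables (K : numFieldType) (X : lmodType K) (Y : submodClosed X).

Lemma extend (I : Type) (rho : I -> X -> \bar K) (F : set I) (d0 : K)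
  (q : subsp Y -> \bar K) :
  (forall i, ext_seminorm (rho i)) -> finite_set F -> 0 < d0 -> seminorm q ->
  (forall y : subsp Y, (forall i, F i -> (rho i (val y) < d0%:E)%E) ->
     (q y < 1%:E)%E) ->
  exists p : X -> \bar K, [/\ seminorm p, (forall y, (q y <= p (val y))%E) &
     exists2 d, 0 < d & forall x, (forall i, F i -> (rho i x < d%:E)%E) ->
       (p x < 1%:E)%E].
Proof.
elim/Pchoice: I rho F => I rho F hrho /finite_fsetP [S ->] d00 [hq qfin] hdom.
pose s := finmap.enum_fset S.
have {}hdom : forall y : subsp Y, (forall i, i \in s -> (rho i (val y) < d0%:E)%E) ->
    (q y < 1%:E)%E by move=> y h; apply: hdom => i; exact: h.
pose N := [set x | forall i, i \in s -> rho i x \is a fin_num].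
have sN : lsubspace N.
  split; first by move=> i _; rewrite (esn0 (hrho i)).
  move=> a u v Nu Nv i is_; apply: (fsnDfin (hrho i)); last exact: Nv.
  by apply: (fsnZfin (hrho i)); exact: Nu.
have sY : lsubspace [set x | x \in Y].
  split; first exact: rpred0.
  by move=> a u v /= Yu Yv; rewrite rpredD // rpredZ.
have [phi [psi [phiL psiL [phiN psiY] onN onY]]] := decomp sN sY.
have phi0 : phi 0 = 0 := (onN 0 (proj1 sN)).1.
have psi0 : psi 0 = 0 := (onN 0 (proj1 sN)).2.
have phiZ a u : phi (a *: u) = a *: phi u by have := phiL a u 0; rewrite phi0 !addr0.
have phiD u v : phi (u + v) = phi u + phi v by have := phiL 1 u v; rewrite !scale1r.
have psiZ a u : psi (a *: u) = a *: psi u by have := psiL a u 0; rewrite psi0 !addr0.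
have psiD u v : psi (u + v) = psi u + psi v by have := psiL 1 u v; rewrite !scale1r.
pose psi' x : subsp Y := exist (fun z => z \in Y) (psi x) (psiY x).
have psi'Z a u : psi' (a *: u) = a *: psi' u by apply: val_inj; rewrite /= psiZ.
have psi'D u v : psi' (u + v) = psi' u + psi' v by apply: val_inj; rewrite /= psiD.
pose rf x := \sum_(i <- s) fine (rho i x).
pose qf y := fine (q y).
have rf0 x : 0 <= rf x by apply: sumr_ge0 => i _; exact: fsn0.
have rfZ a x : N x -> rf (a *: x) = `|a| * rf x.
  move=> Nx; rewrite /rf mulr_sumr big_seq [RHS]big_seq; apply: eq_bigr => i is_.
  exact: (fsnZ (hrho i) _ (Nx i is_)).
have rfD x y : N x -> N y -> rf (x + y) <= rf x + rf y.
  move=> Nx Ny; rewrite /rf -big_split /= !big_seq; apply: ler_sum => i is_.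
  exact: (fsnD (hrho i) (Nx i is_) (Ny i is_)).
have rfterm x i : i \in s -> fine (rho i x) <= rf x.
  move=> is_; exact: (@sum_term K I s (fun j => fine (rho j x)) i (fun j _ => fsn0 (hrho j) x) is_).
have qf0 y : 0 <= qf y by exact: fsn0.
have qfZ a y : qf (a *: y) = `|a| * qf y by exact: (fsnZ hq _ (qfin y)).
have qfD y z : qf (y + z) <= qf y + qf z by exact: (fsnD hq (qfin y) (qfin z)).
pose C := d0^-1.
have C0 : 0 < C by rewrite invr_gt0.
have dom (m : subsp Y) : N (val m) -> qf m <= C * rf (val m).
  move=> Nm; have hr := rf0 (val m).
  rewrite (real_leNgt (ger0_real (qf0 m)) (ger0_real (mulr_ge0 (ltW C0) hr))).
  apply/negP => hlt.
  have qpos : 0 < qf m := le_lt_trans (mulr_ge0 (ltW C0) hr) hlt.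
  pose t := (qf m)^-1.
  have tpos : 0 < t by rewrite invr_gt0.
  have : (q (t *: m) < 1%:E)%E.
    apply: hdom => i is_.
    have -> : val (t *: m) = t *: val m by [].
    rewrite -(fineK (fsnZfin (hrho i) t (Nm i is_))) lte_fin (fsnZ (hrho i) _ (Nm i is_)).
    rewrite (ger0_norm (ltW tpos)).
    apply: le_lt_trans (ler_wpM2l (ltW tpos) (rfterm _ _ is_)) _.
    have h2 : rf (val m) < d0 * qf m.
      by move: hlt; rewrite -(ltr_pM2l d00) mulrA mulfV ?mul1r // lt0r_neq0.
    apply: (lt_le_trans (_ : _ < t * (d0 * qf m))); first by rewrite ltr_pM2l.
    by rewrite mulrCA mulVf ?mulr1 // lt0r_neq0.
  have [_ hZ _] := hq.
  rewrite hZ -(fineK (qfin m)) -EFinM (ger0_norm (ltW tpos)) mulVf ?lt0r_neq0 //.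
  by rewrite ltxx.
pose p x := (C * rf (phi x) + qf (psi' x))%:E.
exists p; split.
- split => //; split.
  + by move=> x; rewrite lee_fin addr_ge0 // mulr_ge0 // ltW.
  + move=> a x; rewrite /p phiZ psi'Z rfZ // qfZ -EFinM; congr (_%:E).
    by rewrite mulrDr mulrCA.
  + move=> x y; rewrite /p phiD psi'D -EFinD lee_fin addrACA -mulrDr.
    apply: lerD; last exact: qfD.
    by apply: ler_wpM2l; [exact: ltW|exact: rfD].
- move=> y.
  have Yy : val y \in Y := valP y.
  have e := onY _ Yy.
  pose m : subsp Y := y - psi' (val y).
  have vm : val m = phi (val y).
    have -> : val m = val y - psi (val y) by [].
    by rewrite -{1}e addrK.
  rewrite -(fineK (qfin y)) lee_fin.
  have -> : fine (q y) = qf (m + psi' (val y)) by rewrite /m subrK.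
  apply: le_trans (qfD m (psi' (val y))) _.
  apply: lerD => //.
  by have := dom m; rewrite vm => /(_ (phiN _)).
- exists (d0 / (size s).+1%:R); first by rewrite divr_gt0 // ltr0Sn.
  move=> x hx.
  have hx' : forall i, i \in s -> (rho i x < (d0 / (size s).+1%:R)%:E)%E.
    by move=> i is_; apply: hx; exact: is_.
  have Nx : N x.
    move=> i is_; have [h0 _ _] := hrho i.
    by have [r _ ->] := nonneg_lt_fin (h0 x) (hx' i is_).
  have [phix psix] := onN x Nx.
  have psi'x : psi' x = 0 by apply: val_inj; rewrite /= psix.
  rewrite /p phix psi'x /qf (esn0 hq) /= addr0 lte_fin.
  have hr : rf x <= (d0 / (size s).+1%:R) *+ size s.
    apply: sum_le_const => i is_.
    by rewrite -lee_fin (fineK (Nx i is_)); apply: ltW; exact: hx'.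
  apply: le_lt_trans (ler_wpM2l (ltW C0) hr) _.
  rewrite mulrnAr mulrA mulVf ?lt0r_neq0 // mul1r -mulr_natl.
  by rewrite ltr_pdivrMr ?ltr0Sn // mul1r ltr_nat.
Qed.
End Ext.


Section Main.
Variables (K : numFieldType) (X : lmodType K) (Y : submodClosed X).

Lemma sn_val (p : X -> \bar K) : seminorm p -> seminorm (fun y : subsp Y => p (val y)).
Proof.
move=> [[h0 hZ hD] hf]; split => //; split => //.
- by move=> a y; exact: (hZ a (val y)).
- by move=> y z; exact: (hD (val y) (val z)).
Qed.

Lemma esn_val (p : X -> \bar K) : ext_seminorm p ->
  ext_seminorm (fun y : subsp Y => p (val y)).
Proof.
move=> [h0 hZ hD]; split => //.
- by move=> a y; exact: (hZ a (val y)).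
- by move=> y z; exact: (hD (val y) (val z)).
Qed.

Lemma rel_induced (I : Type) (rho : I -> X -> \bar K) :
  (forall i, ext_seminorm (rho i)) ->
  rel_top Y (induced_top rho) = induced_top (fun i (y : subsp Y) => rho i (val y)).
Proof.
move=> hrho; apply/seteqP; split.
  move=> W [U [hU ->]] y0 Uy0.
  have [J [fJ [e e0 hJ]]] := hU _ Uy0.
  exists J; split => //; exists e => // y hy; apply: hJ => i Ji; exact: hy i Ji.
move=> W hW; apply: rel_of_local; first exact: induced_top_bigcup.
move=> y0 Wy0; have [J [fJ [e e0 hJ]]] := hW y0 Wy0.
exists (bl rho J (val y0) e); split; first exact: bl_open.
  by move=> i Ji; rewrite subrr (esn0 (hrho i)) lte_fin.
by move=> y hy; apply: hJ => i Ji; exact: hy i Ji.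
Qed.

Lemma finest_sub (I : Type) (rho : I -> X -> \bar K) (tauF : set (set X)) :
  (forall i, ext_seminorm (rho i)) -> finest_lc_topology (induced_top rho) tauF ->
  forall sigma, lc_topology sigma -> sigma `<=` rel_top Y (induced_top rho) ->
  sigma `<=` rel_top Y tauF.
Proof.
move=> hrho [[IF [rhoF [hrhoF tauFE]]] tauFsub tauFmax] sigma [Jt [qq [hqq ->]]] hsig.
have hj : forall j, exists Fd : set I * K, [/\ finite_set Fd.1, 0 < Fd.2 &
    forall y : subsp Y, (forall i, Fd.1 i -> (rho i (val y) < Fd.2%:E)%E) ->
      (qq j y < 1%:E)%E].
  move=> j.
  have hb := bl_open (x0 := (0 : subsp Y)) (e := 1) (fun i => (hqq i).1) (finite_set1 j).
  have [U [tU bE]] := hsig _ hb.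
  have U0 : U 0.
    have : (val @^-1` U) (0 : subsp Y).
      by rewrite -bE => i ->; rewrite subrr (esn0 (hqq j).1) lte_fin.
    by [].
  have [F [fF [d0 d00 HF]]] := tU 0 U0.
  exists (F, d0); split => // y hy.
  have : (val @^-1` U) y by apply: HF => i Fi; rewrite subr0; exact: hy.
  by rewrite -bE => /(_ j erefl); rewrite subr0.
have [Fd hFd] := choice hj.
have hp : forall j, exists p : X -> \bar K, [/\ seminorm p,
    (forall y, (qq j y <= p (val y))%E) &
     exists2 d, 0 < d & forall x, (forall i, (Fd j).1 i -> (rho i x < d%:E)%E) ->
       (p x < 1%:E)%E].
  move=> j; have [fF d00 H] := hFd j.
  exact: extend hrho fF d00 (hqq j) H.
have [p hpp] := choice hp.
have lcp : lc_topology (induced_top p).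
  by exists Jt, p; split => // j; have [] := hpp j.
have subp : induced_top p `<=` induced_top rho.
  move=> U hU x0 Ux0; have [J [fJ [e e0 hJ]]] := hU x0 Ux0.
  pose P j d := forall x, (forall i, (Fd j).1 i -> (rho i x < d%:E)%E) ->
    (p j x < e%:E)%E.
  have Pmono : forall j d d', 0 < d' -> d' <= d -> P j d -> P j d'.
    move=> j d d' d'0 d'd H x hx; apply: H => i Fi.
    by apply: (lt_le_trans (hx i Fi)); rewrite lee_fin.
  have HP : forall j, J j -> exists2 d, 0 < d & P j d.
    move=> j Jj; have [[[ph0 phZ phD] phf] _ [d d0 hd]] := hpp j.
    exists (d * e); first exact: mulr_gt0.
    move=> x hx.
    have hx' : (p j (e^-1 *: x) < 1%:E)%E.
      apply: hd => i Fi; have [h0 hZ _] := hrho i.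
      have [r r0 hr] := nonneg_lt_fin (h0 x) (hx i Fi).
      have ei : 0 < e^-1 by rewrite invr_gt0.
      rewrite hZ hr -EFinM lte_fin (ger0_norm (ltW ei)).
      have := hx i Fi; rewrite hr lte_fin => hlt.
      by rewrite -(ltr_pM2l e0) mulrA mulfV ?lt0r_neq0 // mul1r mulrC.
    have -> : x = e *: (e^-1 *: x) by rewrite scalerA mulfV ?lt0r_neq0 // scale1r.
    rewrite phZ -(fineK (phf _)) -EFinM lte_fin (ger0_norm (ltW e0)).
    move: hx'; rewrite -(fineK (phf _)) lte_fin => hx'.
    by rewrite -[X in _ < X]mulr1 ltr_pM2l.
  have [d d0 Hd] := finite_min fJ Pmono HP.
  exists (\bigcup_(j in J) (Fd j).1); split.
    by apply: bigcup_finite => // j _; have [] := hFd j.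
  exists d => // x hx; apply: hJ => j Jj; apply: (Hd j Jj (x - x0)) => i Fi.
  by apply: hx; exists j.
have subF := tauFmax _ lcp (subp).
move=> W hW; apply: rel_of_local.
  by rewrite tauFE; exact: induced_top_bigcup.
move=> y0 Wy0; have [J [fJ [e e0 hJ]]] := hW y0 Wy0.
exists (bl p J (val y0) e); split.
- apply: subF; apply: bl_open => // j.
  by have [[] ] := hpp j.
- move=> j Jj; have [[hpe _] _ _] := hpp j.
  by rewrite subrr (esn0 hpe) lte_fin.
- move=> y hy; apply: hJ => j Jj; have [_ hd _] := hpp j.
  apply: le_lt_trans (hd (y - y0)) _; exact: hy j Jj.
Qed.

End Main.


Section Dual.
Variables (K : numFieldType) (Y : lmodType K) (f : Y -> K).
Hypothesis flin : forall (a : K) x y, f (a *: x + y) = a * f x + f y.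

Lemma lf0 : f 0 = 0.
Proof.
have h : f 0 = f 0 + f 0 by have := flin 1 0 0; rewrite scale1r addr0 mul1r.
by have := subrr (f 0); rewrite {1}h addrK.
Qed.
Lemma lfZ a x : f (a *: x) = a * f x.
Proof. by have := flin a x 0; rewrite addr0 lf0 addr0. Qed.
Lemma lfD x y : f (x + y) = f x + f y.
Proof. by have := flin 1 x y; rewrite scale1r mul1r. Qed.
Lemma lfB x y : f (x - y) = f x - f y.
Proof. by rewrite lfD -scaleN1r lfZ mulN1r. Qed.

Lemma abs_sn : seminorm (fun y => (`|f y|)%:E).
Proof.
split => //; split.
- by move=> x; rewrite lee_fin.
- by move=> a x; rewrite lfZ normrM EFinM.
- by move=> x y; rewrite lfD -EFinD lee_fin ler_normD.
Qed.

End Dual.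

Local Close Scope ring_scope.
Unset Implicit Arguments.

Theorem theorem4p1 (K : numFieldType) (X : lmodType K) (tau tauF : set (set X))
  (Y : submodClosed X) :
  elc_topology tau -> finest_lc_topology tau tauF ->
  finest_lc_topology (rel_top Y tau) (rel_top Y tauF) /\
  cdual (rel_top Y tauF) = cdual (rel_top Y tau).
Proof.
move=> [I [rho [hrho tauE]]] hF.
have hF' := hF; rewrite tauE in hF'.
case: hF => [[IF [rhoF [hrhoF tauFE]]] tauFsub tauFmax].
have relsub : rel_top Y tauF `<=` rel_top Y tau.
  by move=> W [U [hU ->]]; exists U; split => //; exact: tauFsub.
have fin_sub := finest_sub (Y := Y) hrho hF'.
split.
- split.
  + exists IF, (fun i (y : subsp Y) => rhoF i (val y)); split.
      by move=> i; exact: sn_val.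
    by rewrite tauFE; apply: rel_induced => i; exact: (hrhoF i).1.
  + exact: relsub.
  + by move=> sigma lcs ssub; apply: fin_sub => //; rewrite -tauE.
- apply/seteqP; split => g [glin gcont]; split => // O oO.
  + exact: relsub (gcont O oO).
  + pose sg := induced_top (fun (_ : unit) y => (`|g y|)%:E).
    have lcg : lc_topology sg.
      by exists unit, (fun _ y => (`|g y|)%:E); split => // _; exact: abs_sn.
    have sgsub : sg `<=` rel_top Y (induced_top rho).
      move=> W hW; apply: rel_of_local; first exact: induced_top_bigcup.
      move=> y0 Wy0; have [J [fJ [e e0 hJ]]] := hW y0 Wy0.
      have [U [hU hUe]] := gcont _ (ball_open (g y0) e).
      rewrite tauE in hU.
      exists U; split => //.
        have : (g @^-1` ball (g y0) e) y0 by exact: ballxx.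
        by rewrite hUe.
      move=> y; rewrite -hUe => hy; apply: hJ => i _.
      move: hy; rewrite /ball /=.
      by rewrite lte_fin (lfB glin) distrC.
    apply: (fin_sub _ lcg sgsub).
    move=> y0 Oy0; have [e e0 he] : exists2 e, (0 < e)%R & ball (g y0) e `<=` O.
      by have := oO _ Oy0; move/nbhs_ballP.
    exists [set tt]; split; first exact: finite_set1.
    exists e => // y hy; apply: he; have := hy tt erefl.
    rewrite /ball /=.
    by rewrite lte_fin (lfB glin) distrC.
Qed.
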